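(* Let the standing assumptions hold, let $\alpha>0$ and $p\in(0,1]$, and let $(\bm{x}^\star,\bm{w}^\star,\bm{u}_b^\star)$ satisfy $$\bm{w}^\star=\bm{x}^\star-\alpha\nabla F(\bm{x}^\star),\quad \bm{x}^\star=\mathrm{prox}_{\alpha R}\big(\bm{A}(\bm{w}^\star-\sqrt{\bm{B}}\bm{u}_b^\star)\big),\quad \bm{0}=\sqrt{\bm{B}}\big(\bm{w}^\star-\sqrt{\bm{B}}\bm{u}_b^\star\big),$$ with $\bm{u}_b^\star\in\mathrm{range}(\sqrt{\bm{B}})$. Then the iterates of the algorithm below satisfy, for every $k\ge 0$, $$\mathbb{E}\Big[\|\bm{x}^{k+1}-\bm{x}^\star\|^2+\tfrac{1}{p^2}\|\bm{u}^{k+1}-\bm{u}_b^\star\|^2\,\Big|\,\mathcal{F}_k\Big]\le \|\bm{w}^k-\bm{w}^\star\|^2+\big(1-p^2\sigma_m(\bm{B})\big)\tfrac{1}{p^2}\|\bm{u}^k-\bm{u}_b^\star\|^2,$$ where $\mathcal{F}_k$ is the $\sigma$-algebra generated by $\theta_0,\dots,\theta_{k-1}$ (the expectation is over $\theta_k$).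
   Context: Standing assumptions: $f_1,\dots,f_n:\mathbb{R}^d\to\mathbb{R}$ are $\mu$-strongly convex with $\mu\ge0$ and $L$-smooth ($L>0$); $r:\mathbb{R}^d\to\mathbb{R}\cup\{\infty\}$ is proper, closed, convex. For $\bm{x}=\mathrm{col}\{x_1,\dots,x_n\}\in\mathbb{R}^{nd}$, $F(\bm{x})=\sum_i f_i(x_i)$, $R(\bm{x})=\sum_i r(x_i)$, $\mathrm{prox}_{\alpha r}(x)=\arg\min_s\{r(s)+\frac1{2\alpha}\|s-x\|^2\}$ and $\mathrm{prox}_{\alpha R}$ acts blockwise. $W\in\mathbb{R}^{n\times n}$ is symmetric, $W\bm1=\bm1$, $W_{ij}>0$ on edges of an undirected connected graph and $W_{ij}=0$ for non-adjacent $i\ne j$. $A,B$ are polynomials in $W$ with $A^{\sf T}=A$, $A\bm1=\bm1$, $B\succeq0$, $\mathrm{null}(B)=\mathrm{span}(\bm1)$, $I-A^2-B\succeq0$; $\bm A=A\otimes I_d$, $\bm B=B\otimes I_d$, $\sqrt{\bm B}=\sqrt B\otimes I_d$ (PSD square root); $\sigma_m(\bm B)$ is the smallest nonzero singular value of $\bm B$. Algorithm (FlexATC, equivalent form): $\theta_0,\theta_1,\dots$ are i.i.d. in $\{0,1\}$ with $\mathrm{Prob}(\theta_k=1)=p$; $\bm{A}_k=\theta_k\bm{A}+(1-\theta_k)\bm{I}$ and $\sqrt{\bm{B}_k}=\theta_k\sqrt{\bm B}$. Given $\bm{x}^0\in\mathbb{R}^{nd}$ and $\bm{u}^0=\bm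 0$, for $k\ge0$: $\bm{w}^k=\bm{x}^k-\alpha\nabla F(\bm{x}^k)$, $\bm{x}^{k+1}=\mathrm{prox}_{\alpha R}\big(\bm{A}_k(\bm{w}^k-\sqrt{\bm B}\bm{u}^k)\big)$, $\bm{u}^{k+1}=\bm{u}^k+p\sqrt{\bm B_k}(\bm w^k-\sqrt{\bm B}\bm u^k)$. *)

(* Defs.v *)
From mathcomp Require Import all_boot all_algebra.
From mathcomp Require Import all_classical all_reals all_analysis.
Import GRing.Theory Num.Theory.
Import numFieldNormedType.Exports.

Set Implicit Arguments.
Unset Strict Implicit.
Unset Printing Implicit Defensive.

Local Open Scope ring_scope.

(* Representation convention: a stacked vector col{x_1,...,x_n} in R^{nd} is
   represented by the n x d matrix X whose i-th row is x_i.  Then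
   (M (x) I_d) col{x_i} corresponds to M *m X, and the Euclidean norm of the
   stacked vector is the Frobenius norm of X. *)

Section Defs.
Variable R : realType.

Definition sqnorm m k (X : 'M[R]_(m, k)) : R := \sum_i \sum_j X i j ^+ 2.

Definition dotr d (u v : 'rV[R]_d) : R := \sum_j u 0 j * v 0 j.

Definition is_gradient d (f : 'rV[R]_d -> R) (g : 'rV[R]_d -> 'rV[R]_d) :=
  forall x : 'rV[R]_d, differentiable f x /\
     ('d f x : 'rV[R]_d -> R) = (fun h => dotr (g x) h).

Definition convex_fun d (h : 'rV[R]_d -> R) :=
  forall (x y : 'rV[R]_d) (t : R), 0 <= t -> t <= 1 ->
    h (t *: x + (1 - t) *: y) <= t * h x + (1 - t) * h y.

Definition strongly_convex d (mu : R) (f : 'rV[R]_d -> R) :=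
  convex_fun (fun x => f x - mu / 2 * sqnorm x).

Definition L_smooth d (L : R) (f : 'rV[R]_d -> R) (g : 'rV[R]_d -> 'rV[R]_d) :=
  is_gradient f g /\
  forall x y, Num.sqrt (sqnorm (g x - g y)) <= L * Num.sqrt (sqnorm (x - y)).

Definition proper_fun d (r : 'rV[R]_d -> \bar R) :=
  (forall x, r x != -oo%E) /\ (exists x, r x \is a fin_num).

Definition closed_fun d (r : 'rV[R]_d -> \bar R) := lower_semicontinuous r.

Definition convex_efun d (r : 'rV[R]_d -> \bar R) :=
  forall (x y : 'rV[R]_d) (t : R), 0 <= t -> t <= 1 ->
    (r (t *: x + (1 - t) *: y)%R <= t%:E * r x + (1 - t)%:E * r y)%E.

Definition is_prox d (alpha : R) (r : 'rV[R]_d -> \bar R) (x s : 'rV[R]_d) :=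
  forall y : 'rV[R]_d,
    (r s + (1 / (2 * alpha) * sqnorm (s - x)%R)%R%:E
       <= r y + (1 / (2 * alpha) * sqnorm (y - x)%R)%R%:E)%E.

Definition undirected_connected n (adj : rel 'I_n) :=
  [/\ forall i j, adj i j = adj j i, forall i, ~~ adj i i
    & forall i j, connect adj i j].

Definition mixing_matrix n (adj : rel 'I_n) (W : 'M[R]_n) :=
  [/\ W^T = W, W *m (const_mx 1 : 'cV[R]_n) = const_mx 1,
      forall i j, adj i j -> 0 < W i j
    & forall i j, i != j -> ~~ adj i j -> W i j = 0].

Definition poly_in n (W M : 'M[R]_n) :=
  exists p : {poly R}, M = \sum_(i < size p) p`_i *: W ^+ i.

Definition psd n (M : 'M[R]_n) :=
  M^T = M /\ forall v : 'cV[R]_n, 0 <= (v^T *m M *m v) 0 0.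

Definition null_span1 n (M : 'M[R]_n) :=
  forall v : 'cV[R]_n, M *m v = 0 <-> exists c : R, v = c *: const_mx 1.

Definition psd_sqrt n (B sB : 'M[R]_n) := psd sB /\ sB *m sB = B.

Definition smallest_nonzero_sv n (M : 'M[R]_n) (s : R) :=
  [/\ 0 < s, eigenvalue (M^T *m M) (s ^+ 2)
    & forall t, 0 < t -> eigenvalue (M^T *m M) (t ^+ 2) -> s <= t].

Definition gradF n d (g : 'I_n -> 'rV[R]_d -> 'rV[R]_d) (X : 'M[R]_(n, d))
  : 'M[R]_(n, d) := \matrix_(i, j) g i (row i X) 0 j.

Definition proxR n d (P : 'rV[R]_d -> 'rV[R]_d) (X : 'M[R]_(n, d))
  : 'M[R]_(n, d) := \matrix_(i, j) P (row i X) 0 j.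

(* One step of FlexATC (equivalent form) with coin theta_k = th, acting on the
   state (x^k, u^k); returns (x^{k+1}, u^{k+1}). *)
Definition flex_step n d (alpha p : R) (A sB : 'M[R]_n)
  (g : 'I_n -> 'rV[R]_d -> 'rV[R]_d) (P : 'rV[R]_d -> 'rV[R]_d) (th : bool)
  (s : 'M[R]_(n, d) * 'M[R]_(n, d)) : 'M[R]_(n, d) * 'M[R]_(n, d) :=
  let x := s.1 in let u := s.2 in
  let w := x - alpha *: gradF g x in
  let v := w - sB *m u in
  let Ak := if th then A else 1%:M in
  let sBk := if th then sB else 0 in
  (proxR P (Ak *m v), u + p *: (sBk *m v)).

Fixpoint flex_iter n d (alpha p : R) (A sB : 'M[R]_n)
  (g : 'I_n -> 'rV[R]_d -> 'rV[R]_d) (P : 'rV[R]_d -> 'rV[R]_d)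
  (theta : nat -> bool) (x0 : 'M[R]_(n, d)) (k : nat)
  : 'M[R]_(n, d) * 'M[R]_(n, d) :=
  match k with
  | 0 => (x0, 0)
  | k'.+1 => flex_step alpha p A sB g P (theta k')
               (flex_iter alpha p A sB g P theta x0 k')
  end.

Definition bern_expect (p : R) (h : bool -> R) : R :=
  p * h true + (1 - p) * h false.

End Defs.

(* Main.v *)
Require Import Defs.
From mathcomp Require Import all_boot all_algebra.
From mathcomp Require Import all_classical all_reals all_analysis.
From mathcomp Require Import complex lra ring.
Import GRing.Theory Num.Theory.
Import order.Order.TTheory.
Import numFieldNormedType.Exports.
Local Open Scope ring_scope.

Set Implicit Arguments.
Unset Strict Implicit.
Section IP.
Variable R : realType.

Definition ip m k (X Y : 'M[R]_(m, k)) : R := \sum_i \sum_j X i j * Y i j.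

Lemma sqnormE m k (X : 'M[R]_(m, k)) : sqnorm X = ip X X.
Proof. by apply: eq_bigr => i _; apply: eq_bigr => j _; rewrite expr2. Qed.

Lemma ipC m k (X Y : 'M[R]_(m, k)) : ip X Y = ip Y X.
Proof. by apply: eq_bigr => i _; apply: eq_bigr => j _; rewrite mulrC. Qed.

Lemma ipDl m k (X Y Z : 'M[R]_(m, k)) : ip (X + Y) Z = ip X Z + ip Y Z.
Proof.
rewrite /ip -big_split; apply: eq_bigr => i _.
by rewrite -big_split; apply: eq_bigr => j _; rewrite mxE mulrDl.
Qed.

Lemma ipZl m k a (X Y : 'M[R]_(m, k)) : ip (a *: X) Y = a * ip X Y.
Proof.
rewrite /ip mulr_sumr; apply: eq_bigr => i _.
by rewrite mulr_sumr; apply: eq_bigr => j _; rewrite mxE mulrA.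
Qed.

Lemma ipNl m k (X Y : 'M[R]_(m, k)) : ip (- X) Y = - ip X Y.
Proof. by rewrite -scaleN1r ipZl mulN1r. Qed.

Lemma ipBl m k (X Y Z : 'M[R]_(m, k)) : ip (X - Y) Z = ip X Z - ip Y Z.
Proof. by rewrite ipDl ipNl. Qed.

Lemma ipDr m k (X Y Z : 'M[R]_(m, k)) : ip Z (X + Y) = ip Z X + ip Z Y.
Proof. by rewrite ipC ipDl ipC (ipC Y). Qed.

Lemma ipZr m k a (X Y : 'M[R]_(m, k)) : ip Y (a *: X) = a * ip Y X.
Proof. by rewrite ipC ipZl ipC. Qed.

Lemma ipNr m k (X Y : 'M[R]_(m, k)) : ip Y (- X) = - ip Y X.
Proof. by rewrite ipC ipNl ipC. Qed.

Lemma ipBr m k (X Y Z : 'M[R]_(m, k)) : ip Z (X - Y) = ip Z X - ip Z Y.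
Proof. by rewrite ipDr ipNr. Qed.

Lemma ip0l m k (Y : 'M[R]_(m, k)) : ip 0 Y = 0.
Proof. by rewrite -(scale0r 0) ipZl mul0r. Qed.

Lemma ip0r m k (Y : 'M[R]_(m, k)) : ip Y 0 = 0.
Proof. by rewrite ipC ip0l. Qed.

Lemma ip_ge0 m k (X : 'M[R]_(m, k)) : 0 <= ip X X.
Proof. by rewrite -sqnormE; do 2!apply: sumr_ge0 => ? _; apply: sqr_ge0. Qed.

Lemma ip_mull m k l (M : 'M[R]_(m, l)) (X : 'M[R]_(l, k)) Y :
  ip (M *m X) Y = ip X (M^T *m Y).
Proof.
rewrite /ip.
under eq_bigr => i _ do under eq_bigr => j _ do rewrite mxE big_distrl /=.
under [RHS]eq_bigr => i _ do under eq_bigr => j _ do rewrite mxE big_distrr /=.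
under eq_bigr => i _ do rewrite exchange_big /=.
rewrite exchange_big /=; apply: eq_bigr => h _.
rewrite exchange_big /=; apply: eq_bigr => j _.
by apply: eq_bigr => i _; rewrite mxE mulrCA mulrA.
Qed.

Lemma ip_le m k (X Y : 'M[R]_(m, k)) : 2 * ip X Y <= ip X X + ip Y Y.
Proof.
have := ip_ge0 (X - Y); rewrite !ipBl !ipBr (ipC Y X); lra.
Qed.


Lemma ip_expand m k (X Y : 'M[R]_(m, k)) t :
  ip (X + t *: Y) (X + t *: Y) = ip X X + 2 * t * ip X Y + t ^+ 2 * ip Y Y.
Proof. rewrite !(ipDl, ipDr, ipZl, ipZr) (ipC Y X); ring. Qed.

Lemma prox_nonexp d (alpha : R) (r : 'rV[R]_d -> \bar R) (P : 'rV[R]_d -> 'rV[R]_d) :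
  0 < alpha -> proper_fun r -> convex_efun r ->
  (forall x, is_prox alpha r x (P x)) ->
  forall a b, sqnorm (P a - P b) <= sqnorm (a - b).
Proof.
move=> al0 [rnN [x0 x0fin]] rconv hP a b.
have fin z : r (P z) \is a fin_num.
  have := hP z x0; rewrite -(fineK x0fin).
  case E: (r (P z)) => [rho| |] //= _.
  by have := rnN (P z); rewrite E.
pose k := 1 / (2 * alpha).
have k0 : 0 < k by rewrite /k divr_gt0 // mulr_gt0.
have one : forall t, 0 < t -> t <= 1 -> forall z w,
  fine (r (P z)) + k * ip (P z - z) (P z - z) <=
  t * fine (r (P w)) + (1 - t) * fine (r (P z)) +
  k * ip ((P z - z) + t *: (P w - P z)) ((P z - z) + t *: (P w - P z)).
  move=> t t0 t1 z w.
  have h := hP z (t *: P w + (1 - t) *: P z).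
  have c := rconv (P w) (P z) t (ltW t0) t1.
  rewrite -(fineK (fin z)) in h c; rewrite -(fineK (fin w)) in c.
  have := le_trans h (leeD2r _ c).
  rewrite -!EFinM -!EFinD lee_fin !sqnormE.
  have -> : t *: P w + (1 - t) *: P z - z = (P z - z) + t *: (P w - P z).
    by apply/matrixP => i j; rewrite !mxE; ring.
  done.
set s1 := P a; set s2 := P b.
pose D := ip (s1 - s2) (s1 - s2); pose q := ip (a - b) (s1 - s2).
have key : forall t, 0 < t -> t <= 1 -> (1 - t) * D <= q.
  move=> t t0 t1.
  have h1 := one t t0 t1 a b; have h2 := one t t0 t1 b a.
  rewrite -/s1 -/s2 in h1 h2.
  rewrite !ip_expand in h1 h2.
  have D1 : ip (s2 - s1) (s2 - s1) = D.
    by rewrite /D -opprB ipNl ipNr opprK.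
  have I12 : ip (s1 - a) (s2 - s1) + ip (s2 - b) (s1 - s2) = q - D.
    rewrite /q /D !(ipBl, ipBr, ipDl, ipDr, ipNl, ipNr).
    have := ipC s1 s2; have := ipC s1 a; have := ipC s1 b; have := ipC s2 a;
    have := ipC s2 b; have := ipC a b.
    lra.
  rewrite D1 in h1.
  have S : 0 <= (k * t) * (ip (s1 - a) (s2 - s1) + ip (s2 - b) (s1 - s2) + t * D).
    move: h1 h2; rewrite -/D; lra.
  rewrite I12 in S.
  have kt : 0 < k * t by rewrite mulr_gt0.
  rewrite pmulr_rge0 // in S; lra.
have Dq : D <= q.
  have [//|qD] := lerP D q.
  have q0 : 0 <= q by have := key 1 ltr01 (lexx _); rewrite subrr mul0r.
  have D0 : 0 < D by apply: le_lt_trans qD.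
  pose t := (D - q) / (2 * D).
  have t0 : 0 < t by rewrite /t divr_gt0 ?subr_gt0 // mulr_gt0.
  have t1 : t <= 1 by rewrite /t ler_pdivrMr ?mulr_gt0 //; lra.
  have := key t t0 t1.
  have -> : (1 - t) * D = (D + q) / 2.
    by rewrite /t; field; rewrite gt_eqF.
  move=> h; have : D + q <= 2 * q.
    by move: h; rewrite ler_pdivrMr //; lra.
  lra.
have := ip_le (a - b) (s1 - s2).
rewrite !sqnormE -/D -/q; lra.
Qed.


Lemma ip_cols n d (X Y : 'M[R]_(n, d)) : ip X Y = \sum_j ip (col j X) (col j Y).
Proof.
rewrite /ip exchange_big /=; apply: eq_bigr => j _.
by apply: eq_bigr => i _; rewrite big_ord1 !mxE.
Qed.

Lemma col_mulmx n m d (M : 'M[R]_(m, n)) (X : 'M[R]_(n, d)) j :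
  col j (M *m X) = M *m col j X.
Proof. by apply/matrixP => i l; rewrite !mxE; apply: eq_bigr => h _; rewrite !mxE. Qed.

Lemma quadE n (M : 'M[R]_n) (x : 'cV[R]_n) : (x^T *m M *m x) 0 0 = ip x (M *m x).
Proof.
rewrite -mulmxA mxE /ip; apply: eq_bigr => i _.
by rewrite big_ord1 !mxE.
Qed.

Lemma ip_cV n (x : 'cV[R]_n) : ip x x = \sum_i x i 0 ^+ 2.
Proof. by apply: eq_bigr => i _; rewrite big_ord1 expr2. Qed.

Lemma psd_ip n d (M : 'M[R]_n) (X : 'M[R]_(n, d)) : psd M -> 0 <= ip X (M *m X).
Proof.
move=> [_ hM]; rewrite ip_cols; apply: sumr_ge0 => j _.
by rewrite col_mulmx -quadE.
Qed.

Lemma sqnorm_rows n d (X : 'M[R]_(n, d)) : sqnorm X = \sum_i sqnorm (row i X).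
Proof.
rewrite /sqnorm; apply: eq_bigr => i _; rewrite big_ord1.
apply: eq_bigr => j _.
rewrite mxE.
done.
Qed.

Lemma proxR_nonexp n d (alpha : R) (r : 'rV[R]_d -> \bar R) (P : 'rV[R]_d -> 'rV[R]_d) :
  0 < alpha -> proper_fun r -> convex_efun r ->
  (forall x, is_prox alpha r x (P x)) ->
  forall X Y : 'M[R]_(n, d), sqnorm (proxR P X - proxR P Y) <= sqnorm (X - Y).
Proof.
move=> a0 pr cv hP X Y; rewrite !(sqnorm_rows (_ - _)); apply: ler_sum => i _.
have -> : row i (proxR P X - proxR P Y) = P (row i X) - P (row i Y).
  by apply/rowP => j; rewrite !mxE.
have -> : row i (X - Y) = row i X - row i Y by apply/rowP => j; rewrite !mxE.
exact: (prox_nonexp a0 pr cv hP).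
Qed.

End IP.

Section Core.
Variable R : realType.
Local Notation C := (R[i]).
Local Notation rc := (real_complex R).
Local Open Scope sesquilinear_scope.

Lemma conj_realC (r : R) : ((r%:C)%C : C)^* = (r%:C)%C.
Proof. by apply/eqP; rewrite eq_complex /= oppr0 !eqxx. Qed.

Lemma eig_real n (B : 'M[R]_n) (a : R) :
  eigenvalue (map_mx rc B) (a%:C)%C -> eigenvalue B a.
Proof. by rewrite !eigenvalue_root_char -map_char_poly fmorph_root. Qed.

Lemma Re_sum n (F : 'I_n -> C) : complex.Re (\sum_j F j) = \sum_j complex.Re (F j).
Proof.
elim/big_rec2: _ => [//|j a z _ <-]; by case: (F j) => ? ?; case: z => ? ?.
Qed.

Lemma Im_sum n (F : 'I_n -> C) : complex.Im (\sum_j F j) = \sum_j complex.Im (F j).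
Proof.
elim/big_rec2: _ => [//|j a z _ <-]; by case: (F j) => ? ?; case: z => ? ?.
Qed.

Lemma Re_mulr (z : C) (r : R) : complex.Re (z * (r%:C)%C) = complex.Re z * r.
Proof. by case: z => a b /=; rewrite mulr0 subr0. Qed.

Lemma Im_mulr (z : C) (r : R) : complex.Im (z * (r%:C)%C) = complex.Im z * r.
Proof. by case: z => a b /=; rewrite mulr0 add0r. Qed.

Lemma trC_mul m k l (X : 'M[C]_(m, k)) (Y : 'M[C]_(k, l)) :
  (X *m Y)^t* = Y^t* *m X^t*.
Proof. by rewrite trmx_mul map_mxM. Qed.

Lemma core n (B : 'M[R]_n) (s : R) (x : 'cV[R]_n) :
  psd B -> null_span1 B -> smallest_nonzero_sv B s ->
  \sum_i x i 0 = 0 ->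
  s * \sum_i x i 0 ^+ 2 <= (x^T *m B *m x) 0 0.
Proof.
move=> [Bsym Bpsd] Bnull [s_gt0 _ s_min] x1.
pose Bc := map_mx rc B.
have Bherm : Bc \is hermsymmx.
  rewrite qualifE /= expr0 scale1r; apply/eqP/matrixP => i j.
  by rewrite !mxE conj_realC -[in LHS]Bsym mxE.
pose P := spectralmx Bc. pose D := spectral_diag Bc.
have PU : P \is unitarymx := spectral_unitarymx Bc.
have PPt : P *m P^t* = 1%:M by apply/unitarymxP.
have PtP : P^t* *m P = 1%:M by apply: mulmx1C.
have BcE : Bc = P^t* *m diag_mx D *m P.
  have /orthomx_spectralP := hermitian_normalmx Bherm.
  by rewrite invmx_unitary.
have Dreal := hermitian_spectral_diag_real Bherm.
have PB : P *m Bc = diag_mx D *m P by rewrite BcE !mulmxA PPt mul1mx.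
pose y : 'rV[C]_n := (map_mx rc x)^T.
have yt : y^t* = map_mx rc x.
  by apply/matrixP => i j; rewrite !mxE conj_realC.
pose c := y *m P^t*.
have ct : c^t* = P *m y^t* by rewrite trC_mul trmxCK.
have QC : (y *m Bc *m y^t*) 0 0 = (((x^T *m B *m x) 0 0)%:C)%C.
  by rewrite yt /y map_trmx -!map_mxM mxE.
have NC : (y *m y^t*) 0 0 = ((\sum_i x i 0 ^+ 2)%:C)%C.
  rewrite yt /y map_trmx -!map_mxM mxE !mxE; congr (_%:C)%C.
  by apply: eq_bigr => i _; rewrite !mxE expr2.
have Q2 : y *m Bc *m y^t* = c *m diag_mx D *m c^t*.
  by rewrite ct BcE /c !mulmxA.
have N2 : y *m y^t* = c *m c^t*.
  by rewrite ct /c -(mulmxA y) (mulmxA _ P) PtP mul1mx.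
have sumD : (c *m diag_mx D *m c^t*) 0 0 = \sum_i D 0 i * (c 0 i * (c 0 i)^*).
  rewrite mul_mx_diag mxE; apply: eq_bigr => i _; rewrite !mxE.
  by rewrite mulrCA mulrA.
have sumN : (c *m c^t*) 0 0 = \sum_i (c 0 i * (c 0 i)^*).
  by rewrite mxE; apply: eq_bigr => i _; rewrite !mxE.
have term : forall i,
    ((s%:C)%C * (c 0 i * (c 0 i)^*) <= D 0 i * (c 0 i * (c 0 i)^*)).
  move=> i.
  have Dr : D 0 i \is Num.real by apply: (mxOverP Dreal).
  move: Dr; case Di: (D 0 i) => [a b] Dr.
  have b0 : b = 0.
    by move: Dr; rewrite realE !lecE /=; case/orP => /andP[/eqP h _].
  subst b; rewrite complexr0.
  have eigv : row i P *m Bc = (a%:C)%C *: row i P.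
    rewrite -row_mul PB mul_diag_mx; apply/matrixP => k j.
    by rewrite !mxE Di complexr0.
  have Pij j : row i P 0 j = P i j by rewrite mxE.
  have rowi_neq0 : row i P != 0.
    apply/eqP => h; move/matrixP: PPt => /(_ i i); rewrite !mxE eqxx /=.
    rewrite big1 => [/eqP|j _]; first by rewrite eq_sym oner_eq0.
    move/rowP: h => /(_ j); rewrite !mxE => ->.
    by rewrite mul0r.
  have eigC : eigenvalue Bc (a%:C)%C.
    by apply/eigenvalueP; exists (row i P).
  have /eigenvalueP [u uB u0] := @eig_real _ _ _ eigC.
  have uu : 0 < (u *m u^T) 0 0.
    rewrite mxE lt0r; apply/andP; split; last first.
      by apply: sumr_ge0 => j _; rewrite mxE -expr2 sqr_ge0.
    apply/eqP => /psumr_eq0P h; move/eqP: u0; apply; apply/rowP => j.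
    have := h (fun k _ => ltac:(rewrite mxE -expr2; exact: sqr_ge0)) j isT.
    by rewrite mxE -expr2 => /eqP; rewrite sqrf_eq0 => /eqP ->; rewrite mxE.
  have a_ge0 : 0 <= a.
    have := Bpsd u^T; rewrite trmxK uB -scalemxAl mxE.
    by rewrite pmulr_lge0.
  have [a0|an0] := eqVneq a 0.
    subst a.
    have eigv0 : row i P *m Bc = 0 by rewrite eigv scale0r.
    have Rconst : forall (h : C -> R),
        (forall (z : C) (r : R), h (z * (r%:C)%C) = h z * r) ->
        (forall (F : 'I_n -> C), h (\sum_j F j) = \sum_j h (F j)) ->
        h 0 = 0 ->
        exists al : R, forall j, h (P i j) = al.
      move=> h hM hS h0.
      pose re : 'cV[R]_n := \col_j h (P i j).
      have Bre : B *m re = 0.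
        apply/matrixP => k l; rewrite !mxE.
        move/matrixP: eigv0 => /(_ 0 k); rewrite !mxE => e.
        rewrite -[RHS]h0 -e hS.
        apply: eq_bigr => j _; rewrite !mxE hM mulrC; congr (_ * _).
        by rewrite -[in LHS]Bsym mxE.
      have [al hal] := (Bnull re).1 Bre.
      exists al => j.
      by move/matrixP: hal => /(_ j 0); rewrite !mxE mulr1.
    have [al hal] := Rconst (@complex.Re R) Re_mulr (@Re_sum n) erefl.
    have [be hbe] := Rconst (@complex.Im R) Im_mulr (@Im_sum n) erefl.
    have PijE j : P i j = (al +i* be)%C.
      by move: (hal j) (hbe j); case: (P i j) => ? ? /= -> ->.
    have c0 : c 0 i = 0.
      rewrite /c mxE (eq_bigr (fun j => (x j 0)%:C%C * (al +i* be)%C^* )).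
        by rewrite -big_distrl /= -rmorph_sum x1 rmorph0 mul0r.
      by move=> j _; rewrite !mxE PijE.
    by rewrite c0 mul0r !mulr0.
  have a_gt0 : 0 < a by rewrite lt0r an0 a_ge0.
  have sa : s <= a.
    apply: s_min => //; apply/eigenvalueP; exists u => //.
    by rewrite Bsym mulmxA uB -scalemxAl uB scalerA expr2.
  by rewrite ler_wpM2r ?mul_conjC_ge0 // lecR.
have ineqC : (((s * \sum_i x i 0 ^+ 2)%:C)%C : C) <= (((x^T *m B *m x) 0 0)%:C)%C.
  rewrite -QC Q2 sumD rmorphM /= -NC N2 sumN mulr_sumr.
  by apply: ler_sum => i _; apply: term.
by rewrite lecR in ineqC.
Qed.

End Core.

Section Main.
Variable R : realType.

Lemma iter_range n d (alpha p : R) (A sB : 'M[R]_n) g P theta (x0 : 'M[R]_(n, d)) k :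
  exists Z, (flex_iter alpha p A sB g P theta x0 k).2 = sB *m Z.
Proof.
elim: k => [|k [Z hZ]] /=; first by exists 0; rewrite mulmx0.
rewrite /flex_step /=; case: (theta k) => /=.
  by eexists; rewrite hZ scalemxAr -mulmxDr.
by exists Z; rewrite mul0mx scaler0 addr0.
Qed.

Lemma ip_eq0 m k (X : 'M[R]_(m, k)) : ip X X = 0 -> X = 0.
Proof.
move=> h; apply/matrixP => i j; rewrite mxE.
have hF : forall i : 'I_m, true -> 0 <= \sum_j X i j * X i j.
  by move=> i' _; apply: sumr_ge0 => j' _; rewrite -expr2 sqr_ge0.
have h1 := psumr_eq0P hF h isT (i := i).
have hG : forall j : 'I_k, true -> 0 <= X i j * X i j.
  by move=> j' _; rewrite -expr2 sqr_ge0.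
have := psumr_eq0P hG h1 isT (i := j).
by rewrite -expr2 => /eqP; rewrite sqrf_eq0 => /eqP.
Qed.

End Main.

Theorem lemma2 (R : realType) (n d : nat)
  (f : 'I_n -> 'rV[R]_d -> R) (g : 'I_n -> 'rV[R]_d -> 'rV[R]_d)
  (mu L : R) (r : 'rV[R]_d -> \bar R) (P : 'rV[R]_d -> 'rV[R]_d)
  (adj : rel 'I_n) (W A B sB : 'M[R]_n) (sigma alpha p : R)
  (xs ws us x0 : 'M[R]_(n, d)) :
  0 <= mu -> 0 < L ->
  (forall i, strongly_convex mu (f i)) ->
  (forall i, L_smooth L (f i) (g i)) ->
  proper_fun r -> closed_fun r -> convex_efun r ->
  undirected_connected adj -> mixing_matrix adj W ->
  poly_in W A -> poly_in W B ->
  A^T = A -> A *m (const_mx 1 : 'cV[R]_n) = const_mx 1 ->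
  psd B -> null_span1 B -> psd (1%:M - A ^+ 2 - B) ->
  psd_sqrt B sB ->
  smallest_nonzero_sv B sigma ->
  0 < alpha -> 0 < p -> p <= 1 ->
  (forall x, is_prox alpha r x (P x)) ->
  ws = xs - alpha *: gradF g xs ->
  xs = proxR P (A *m (ws - sB *m us)) ->
  0 = sB *m (ws - sB *m us) ->
  (exists Z : 'M[R]_(n, d), us = sB *m Z) ->
  forall (theta : nat -> bool) (k : nat),
    let s := flex_iter alpha p A sB g P theta x0 k in
    let wk := s.1 - alpha *: gradF g s.1 in
    bern_expect p (fun th =>
        let s' := flex_step alpha p A sB g P th s in
        sqnorm (s'.1 - xs) + 1 / p ^+ 2 * sqnorm (s'.2 - us))
    <= sqnorm (wk - ws) + (1 - p ^+ 2 * sigma) * (1 / p ^+ 2 * sqnorm (s.2 - us)).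
Proof.
move=> mu0 L0 fconv fsm rprop rclos rconv adjc Wmix Apoly Bpoly Asym A1 Bpsd Bnull
  IAB [sBpsd sBB] ssv al0 p0 p1 hP wsE xsE vs0 [Zs usE] theta k.
cbv zeta.
set s := flex_iter alpha p A sB g P theta x0 k.
have sBsym : sB^T = sB := sBpsd.1.
pose vs := ws - sB *m us.
have sBvs : sB *m vs = 0 by rewrite [RHS]vs0.
have Bvs : B *m vs = 0 by rewrite -sBB -mulmxA sBvs mulmx0.
have Avs : A *m vs = vs.
  apply/matrixP => i j.
  have hB : B *m col j vs = 0.
    by rewrite -col_mulmx Bvs; apply/matrixP => ? ?; rewrite !mxE.
  have [c hc] := (Bnull (col j vs)).1 hB.
  have : A *m col j vs = col j vs by rewrite hc -scalemxAr A1.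
  by move/matrixP => /(_ i 0); rewrite -col_mulmx !mxE.
have xsE' : xs = proxR P vs by rewrite {1}xsE -/vs Avs.
have [Zk hZk] := iter_range alpha p A sB g P theta x0 k.
rewrite -/s in hZk.
rewrite /bern_expect /flex_step /=.
set wk := s.1 - alpha *: gradF g s.1.
set v := wk - sB *m s.2.
pose e := v - vs. pose om := wk - ws. pose de := s.2 - us.
have deE : de = sB *m (Zk - Zs) by rewrite /de hZk usE mulmxBr.
have ev : e = om - sB *m de.
  rewrite /e /v /vs /om /de mulmxBr; apply/matrixP => i j; rewrite !mxE; ring.
have T1 : sqnorm (proxR P (A *m v) - xs) <= ip (A *m e) (A *m e).
  rewrite xsE -/vs -sqnormE /e (mulmxBr A v vs).
  exact: (proxR_nonexp al0 rprop rconv hP).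
have T2 : sqnorm (proxR P (1%:M *m v) - xs) <= ip e e.
  rewrite xsE' -sqnormE /e mul1mx.
  exact: (proxR_nonexp al0 rprop rconv hP).
have U1 : s.2 + p *: (sB *m v) - us = de + p *: (sB *m e).
  rewrite /de /e (mulmxBr sB v vs) sBvs subr0; apply/matrixP => i j; rewrite !mxE; ring.
have U2 : s.2 + p *: (0 *m v) - us = de by rewrite mul0mx scaler0 addr0.
rewrite U1 U2 !sqnormE ip_expand -/om.
rewrite sqnormE in T1 T2.
clearbody e om de.
have sB1 : sB *m (const_mx 1 : 'cV[R]_n) = 0.
  have B1 : B *m (const_mx 1 : 'cV[R]_n) = 0.
    by apply/(Bnull _).2; exists 1; rewrite scale1r.
  apply: ip_eq0; rewrite ip_mull sBsym mulmxA sBB B1 ip0r //.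
have colsum : forall j, \sum_i (col j de) i 0 = 0.
  move=> j.
  have h1 : (const_mx 1 : 'cV[R]_n)^T *m sB = 0.
    by rewrite -[sB]sBsym -trmx_mul sB1 trmx0.
  have : ((const_mx 1 : 'cV[R]_n)^T *m de) 0 j = 0.
    by rewrite deE mulmxA h1 mul0mx mxE.
  rewrite mxE => h2; rewrite -[RHS]h2; apply: eq_bigr => i _; rewrite !mxE; by rewrite mul1r.
have hd : sigma * ip de de <= ip (sB *m de) (sB *m de).
  rewrite ip_mull sBsym mulmxA sBB.
  rewrite (ip_cols de de) (ip_cols de (B *m de)) mulr_sumr.
  apply: ler_sum => jj _.
  by rewrite ip_cV col_mulmx -quadE; apply: core => //; apply: colsum.
have ha : ip (A *m e) (A *m e) + ip (sB *m e) (sB *m e) <= ip e e.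
  have := psd_ip e IAB.
  rewrite !mulmxBl mul1mx !ipBr !ip_mull Asym sBsym !mulmxA sBB.
  by rewrite expr2 -mulmxE; lra.
have hb : ip e e = ip om om - 2 * ip om (sB *m de) + ip (sB *m de) (sB *m de).
  rewrite ev !(ipBl, ipBr) (ipC (sB *m de) om); ring.
have hc : ip de (sB *m e) = ip om (sB *m de) - ip (sB *m de) (sB *m de).
  by rewrite ipC ip_mull sBsym ev !ipBl.
set Ae := ip (A *m e) (A *m e). set Se := ip (sB *m e) (sB *m e).
set Ee := ip e e. set dd := ip de de. set dSe := ip de (sB *m e).
set WW := ip om om. set wSd := ip om (sB *m de). set Sd := ip (sB *m de) (sB *m de).
have pp : 0 < p ^+ 2 by rewrite exprn_gt0.
have p1' : 0 <= 1 - p by rewrite subr_ge0.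
apply: (@le_trans _ _ (p * (Ae + 1 / p ^+ 2 * (dd + 2 * p * dSe + p ^+ 2 * Se)) +
                       (1 - p) * (Ee + 1 / p ^+ 2 * dd))).
  by rewrite lerD // ler_wpM2l ?(ltW p0) // lerD2r.
have E1 : p * (Ae + 1 / p ^+ 2 * (dd + 2 * p * dSe + p ^+ 2 * Se)) +
          (1 - p) * (Ee + 1 / p ^+ 2 * dd)
        = p * (Ae + Se) + (1 - p) * Ee + 2 * dSe + 1 / p ^+ 2 * dd.
  by field; rewrite gt_eqF.
have E2 : (1 - p ^+ 2 * sigma) * (1 / p ^+ 2 * dd) = 1 / p ^+ 2 * dd - sigma * dd.
  by field; rewrite gt_eqF.
have E3 : p * (Ae + Se) <= p * Ee by rewrite ler_wpM2l ?(ltW p0).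
rewrite E1 E2; move: hb hc hd E3; rewrite -/Ee -/dSe -/Sd -/WW -/wSd -/dd; lra.
Qed.
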